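(* Let $(M,g_{\alpha\beta})$ be a conformal completion à la Penrose of a physical space-time with arbitrary $\Lambda$, in the gauge of the context. Choose $p_0\in\mathscr{J}^+$ and a future null vector $\ell^\alpha$ at $p_0$, and let $\gamma$ be the corresponding null geodesic with affine parameter $\lambda$, $\lambda|_{p_0}=0$, normalised by $\ell^\mu N_\mu|_{p_0}=-1$. Assume $\Omega(\lambda)$ admits an expansion in powers of $\lambda$ near $0$, and write $\Omega_i:=\frac{d^i\Omega}{d\lambda^i}(0)$; note $\Omega(0)=0$ and $\Omega_1=-1$. Then, near $\lambda=0$, the physical Weyl tensor along $\gamma$ satisfies at $p_0$ $$(L^*\hat C)_{\alpha\beta\gamma\delta}=\lambda\, d^{(N)}_{\alpha\beta\gamma\delta}+\lambda^2 e^{(III)}_{\alpha\beta\gamma\delta}+\lambda^3 f^{(II/D)}_{\alpha\beta\gamma\delta}+\lambda^4 g^{(I)}_{\alpha\beta\gamma\delta}+\lambda^5 h^{(I)}_{\alpha\beta\gamma\delta}+O(\lambda^6),$$ where (suppressing indices): $$d^{(N)}=-C^{(4,0)},$$ $$e^{(III)}=C^{(3,0)}+\tfrac{\Omega_2}{2}C^{(4,0)}-C^{(4,1)},$$ $$f^{(II/D)}=-C^{(2,0)}-\Omega_2C^{(3,0)}+\tfrac{\Omega_3}{6}C^{(4,0)}+C^{(3,1)}-C^{(4,2)}+\tfrac{\Omega_2}{2}C^{(4,1)},$$ $$g^{(I)}=C^{(1,0)}+\tfrac{3\Omega_2}{2}C^{(2,0)}+\Big(\tfrac{\Omega_2^2}{4}-\tfrac{\Omega_3}{3}\Big)C^{(3,0)}+\tfrac{\Omega_4}{4!}C^{(4,0)}-C^{(2,1)}+C^{(3,2)}-C^{(4,3)}+\tfrac{\Omega_2}{2}C^{(4,2)}-\Omega_2C^{(3,1)}+\tfrac{\Omega_3}{6}C^{(4,1)},$$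 $$h^{(I)}=-C^{(0,0)}-2\Omega_2C^{(1,0)}+\Big(\tfrac{\Omega_3}{2}-\tfrac34\Omega_2^2\Big)C^{(2,0)}+\Big(\tfrac16\Omega_2\Omega_3-\tfrac{\Omega_4}{12}\Big)C^{(3,0)}+\tfrac{\Omega_5}{5!}C^{(4,0)}+C^{(1,1)}-C^{(2,2)}+C^{(3,3)}-C^{(4,4)}+\tfrac32\Omega_2C^{(2,1)}-\Omega_2C^{(3,2)}+\tfrac{\Omega_2}{2}C^{(4,3)}+\tfrac{\Omega_2^2}{4}C^{(3,1)}-\tfrac{\Omega_3}{3}C^{(3,1)}+\tfrac{\Omega_3}{6}C^{(4,2)}+\tfrac{\Omega_4}{4!}C^{(4,1)}.$$ These five tensors are Weyl-tensor candidates. In the null tetrad containing $\ell^\alpha$ and $k^\alpha$, $d^{(N)}$ has only $\psi_4$ possibly non-zero (type N or zero, with $\ell$ a fourfold principal null direction). Their generic Petrov types are N, III, II/D, I, I respectively.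
   Context: A conformal completion à la Penrose of a physical space-time $(\hat M,\hat g_{\alpha\beta})$ is a space-time-with-boundary $(M,g_{\alpha\beta})$ satisfying the following. $\hat M\subset M$ is the interior. There is a smooth function $\Omega$ on $M$ with $\Omega>0$ and $g_{\alpha\beta}=\Omega^2\hat g_{\alpha\beta}$ on $\hat M$. The conformal boundary is $\mathscr{J}=\{\Omega=0\}$, and $d\Omega\neq0$ on $\mathscr{J}$; $\mathscr{J}^+$ denotes its future component. The physical metric satisfies Einstein's equations with cosmological constant $\Lambda$. The signature is $(-,+,+,+)$. $\nabla$ and $\hat\nabla$ denote the Levi-Civita connections of $g$ and $\hat g$. Set $N_\alpha:=\nabla_\alpha\Omega$; indices are raised and lowered with $g$. The gauge is fixed so that $\nabla_\alpha N_\beta=0$ on $\mathscr{J}$, hence $N_\alpha N^\alpha=-\Lambda/3$ on $\mathscr{J}$. The physical Weyl tensor satisfies $\hat C_{\alpha\beta\gamma}{}^\delta=C_{\alpha\beta\gamma}{}^\delta$ on $\hat M$. The rescaled Weyl tensor $d$ is defined by $\Omega d_{\alpha\beta\gamma}{}^\delta=C_{\alpha\beta\gamma}{}^\delta$ and is assumed to extend smoothly to $\mathscr{J}$. A Weyl-tensor candidate is a tensor with all algebraic symmetries of a Weyl tensor (pair antisymmetry, pair-exchange symmetry, cyclic identity, tracelessness). The geodesic $\gamma:[-1,0]\to M$ is the null $g$-geodesic with: - $\gamma(0)=p_0$ and $\gamma([-1,0))\subset\hat M$; - tangent $\ell^\alpha$ and affine parameter $\lambda$. Write $\Omega(\lambda)=\Omega(\gamma(\lambda))$.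 At $p_0$ set: - $k^\alpha:=N^\alpha-\frac{\Lambda}{6}\ell^\alpha$, which is null with $k\cdot\ell=-1$; - $P^\alpha{}_\beta:=\delta^\alpha_\beta+k^\alpha\ell_\beta+\ell^\alpha k_\beta$. Use the null tetrad $(\ell,k,m,\bar m)$ with Newman–Penrose Weyl scalars labelled so that only $\psi_4\neq0$ means $\ell$ is a fourfold principal null direction, and only $\psi_0\neq0$ means $k$ is. Let $t$ and $\hat t$ be the $\nabla$- and $\hat\nabla$-parallel propagators of covectors along $\gamma$ ($t(\lambda_i,\lambda_j)$ maps from $\gamma(\lambda_j)$ to $\gamma(\lambda_i)$). Define $$L_\alpha{}^\beta:=t_\alpha{}^\mu(0,-1)\hat t_\mu{}^\rho(-1,\lambda)t_\rho{}^\beta(\lambda,0)$$ and, for a covariant tensor $T$ at $\gamma(\lambda)$, $$(L^*T)_{\alpha_1\dots\alpha_r}:=L_{\alpha_1}{}^{\nu_1}\cdots L_{\alpha_r}{}^{\nu_r}t_{\nu_1}{}^{\mu_1}(0,\lambda)\cdots t_{\nu_r}{}^{\mu_r}(0,\lambda)T_{\mu_1\dots\mu_r}.$$ The tensors $C^{(a)}$ ($a=0,\dots,4$) are the Weyl-tensor candidates at $p_0$ in the decomposition $$L^*\hat C=\sum_{a=0}^4\Omega^{5-a}C^{(a)}.$$ They are regular as $\lambda\to0$, and each $C^{(a)}$ has only the Weyl scalar $\psi_a$ possibly non-vanishing in the tetrad $(\ell,k,m,\bar m)$. Their leading term is $C^{(4,0)}_{\alpha\beta\gamma\delta}=\frac{4}{\Omega(-1)^2}d_{\mu\nu\rho\sigma}k^\nu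 k^\sigma P_{[\alpha}{}^\mu\ell_{\beta]}P_{[\gamma}{}^\rho\ell_{\delta]}$. Their expansions are $C^{(a)}=\sum_{i\ge0}C^{(a,i)}\lambda^i$. *)

(* Defs.v *)
From mathcomp Require Import all_boot all_algebra.
From mathcomp Require Import all_classical all_reals all_analysis.
From mathcomp Require Import complex.
Set Implicit Arguments. Unset Strict Implicit. Unset Printing Implicit Defensive.
Import GRing.Theory Num.Theory.
Import numFieldNormedType.Exports.
Local Open Scope classical_set_scope.
Local Open Scope ring_scope.

(* Tensors / vectors at p0, in components w.r.t. a fixed basis of T_{p0}M. *)
Definition vec (R : Type) := 'I_4 -> R.
(* covariant 4-tensor T_{abcd} *)
Definition tensor4 (R : Type) := 'I_4 -> 'I_4 -> 'I_4 -> 'I_4 -> R.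

Section Defs.
Variable R : realType.

Definition gdot (g : 'M[R]_4) (u v : vec R) : R :=
  \sum_(a < 4) \sum_(b < 4) g a b * u a * v b.

Definition cR (x : R) : R[i] := Complex x 0.
Definition cvec (u : vec R) : vec R[i] := fun a => cR (u a).
Definition cbar (u : vec R[i]) : vec R[i] := fun a => conjc (u a).

Definition cgdot (g : 'M[R]_4) (u v : vec R[i]) : R[i] :=
  \sum_(a < 4) \sum_(b < 4) cR (g a b) * u a * v b.

Definition cten (T : tensor4 R) (u v w x : vec R[i]) : R[i] :=
  \sum_(a < 4) \sum_(b < 4) \sum_(c < 4) \sum_(d < 4)
     cR (T a b c d) * u a * v b * w c * x d.

Definition null_tetrad (g : 'M[R]_4) (l k : vec R) (m : vec R[i]) : Prop :=
  [/\ gdot g l l = 0, gdot g k k = 0 & gdot g l k = -1] /\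
  [/\ cgdot g (cvec l) m = 0, cgdot g (cvec k) m = 0,
      cgdot g m m = 0 & cgdot g m (cbar m) = 1].

(* Newman-Penrose Weyl scalars of T in the tetrad (l,k,m,mbar), labelled so that
   "only psi_4 <> 0" means l is a fourfold principal null direction and
   "only psi_0 <> 0" means k is. *)
Definition psi (T : tensor4 R) (l k : vec R) (m : vec R[i]) (n : nat) : R[i] :=
  let L := cvec l in let K := cvec k in let Mb := cbar m in
  match n with
  | 0 => cten T L m L m
  | 1 => cten T L K L m
  | 2 => cten T L m Mb K
  | 3 => cten T L K Mb K
  | _ => cten T K Mb K Mb
  end.

Definition only_psi (a : nat) (T : tensor4 R) (l k : vec R) (m : vec R[i]) : Prop :=
  forall b : nat, (b < 5)%N -> b != a -> psi T l k m b = 0.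

Definition weyl_candidate (g : 'M[R]_4) (T : tensor4 R) : Prop :=
  [/\ (forall a b c d, T b a c d = - T a b c d),
      (forall a b c d, T a b d c = - T a b c d),
      (forall a b c d, T c d a b = T a b c d),
      (forall a b c d, T a b c d + T a c d b + T a d b c = 0) &
      (forall b d, \sum_(a < 4) \sum_(c < 4) invmx g a c * T a b c d = 0)].

Definition pseries_near (f : R -> R) (c : nat -> R) : Prop :=
  exists r : R, 0 < r /\
    forall x : R, - r < x <= 0 ->
      (fun n : nat => \sum_(i < n) c i * x ^+ i) @ \oo --> f x.

(* Omega_i := i-th derivative at 0 = i! * (i-th power-series coefficient) *)
Definition Om (c : nat -> R) (i : nat) : R := (i`!)%:R * c i.

End Defs.

(* Main.v *)
Require Import Defs.
From mathcomp Require Import all_boot all_algebra.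
From mathcomp Require Import all_classical all_reals all_analysis.
From mathcomp Require Import complex.
From mathcomp Require Import ring lra.
Import order.Order.TTheory GRing.Theory Num.Theory.
Import numFieldNormedType.Exports.
Set Implicit Arguments. Unset Strict Implicit. Unset Printing Implicit Defensive.
Local Open Scope classical_set_scope.
Local Open Scope ring_scope.
Definition Jet (R : realType) (f : R -> R) (a : nat -> R) (n : nat) : Prop :=
  exists K del : R, 0 < del /\ forall x : R, - del < x < 0 ->
    `|f x - \sum_(i < n) a i * x ^+ i| <= K * `|x| ^+ n.

Lemma geo_bound (R : realType) (q : R) (k : nat) : 0 <= q <= 1/2 ->
  \sum_(i < k) q ^+ i <= 2 - 2 * q ^+ k.
Proof.
move=> /andP[q0 q12]; elim: k => [|k IH]; first by rewrite big_ord0 expr0; lra.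
rewrite big_ord_recr /= exprS.
have : 0 <= q ^+ k by apply: exprn_ge0.
nra.
Qed.

Lemma bounded_terms (R : realType) (u : nat -> R) :
  cvgn (series u) -> exists B, 0 <= B /\ forall i, `|u i| <= B.
Proof.
move=> /cvg_series_bounded H.
have [M0 [_ HM]] := H.
exists (`|M0| + 1); split; first by rewrite addr_ge0.
move=> i; apply: (HM (`|M0| + 1)) => //.
rewrite (le_lt_trans (ler_norm M0)) // ltrDl; lra.
Qed.

Lemma pseries_jet (R : realType) (f : R -> R) (c : nat -> R) (n : nat) :
  pseries_near f c -> Jet f c n.
Proof.
move=> [r [r0 Hr]].
set a := r / 2.
have a0 : 0 < a by rewrite /a; lra.
have Hx0 : - r < - a <= 0 by apply/andP; rewrite /a; split; lra.
have cv := Hr _ Hx0.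
have cs : cvgn (series (fun i => c i * (- a) ^+ i)).
  apply/cvg_ex; exists (f (- a)).
  have -> : series (fun i => c i * (- a) ^+ i) = (fun m => \sum_(i < m) c i * (- a) ^+ i).
    by apply/funext => m; rewrite /series /= big_mkord.
  exact: cv.
have [B [B0 HB]] := bounded_terms cs.
exists (2 * B / a ^+ n), (r / 4); split; first lra.
move=> x /andP[xl xr].
have Hx : - r < x <= 0 by apply/andP; split; lra.
have cvx := Hr _ Hx.
set S := fun m => \sum_(i < m) c i * x ^+ i.
set q := `|x| / a.
have nx : `|x| = - x by rewrite ltr0_norm.
have q0 : 0 <= q by rewrite /q divr_ge0 // ltW.
have q12 : q <= 1 / 2.
  rewrite /q ler_pdivrMr // nx /a; lra.
have xq : `|x| = q * a by rewrite /q divfK // gt_eqF.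
have key : forall d, `|S (n + d)%N - S n| <= B * q ^+ n * \sum_(j < d) q ^+ j.
  elim => [|d IH]; first by rewrite addn0 subrr normr0 big_ord0 mulr0.
  rewrite addnS /S big_ord_recr /= -/(S _) big_ord_recr /=.
  have t : `|c (n + d)%N * x ^+ (n + d)| <= B * q ^+ n * q ^+ d.
    have hb : `|c (n + d)%N| * a ^+ (n + d) <= B.
      by have := HB (n + d)%N; rewrite normrM normrX normrN (gtr0_norm a0).
    rewrite normrM normrX xq exprMn.
    have -> : `|c (n + d)%N| * (q ^+ (n + d) * a ^+ (n + d)) =
      (`|c (n + d)%N| * a ^+ (n + d)) * (q ^+ n * q ^+ d) by rewrite exprD; ring.
    rewrite -[B * _ * _]mulrA; apply: ler_wpM2r => //.
    by rewrite mulr_ge0 // exprn_ge0.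
  rewrite addrAC (le_trans (ler_normD _ _)) // mulrDr lerD //.
have bnd : forall m, (n <= m)%N -> `|S m - S n| <= 2 * B * q ^+ n.
  move=> m /subnKC <-; apply: le_trans (key _) _.
  have g2 := geo_bound (m - n) (introT andP (conj q0 q12)).
  have qd : 0 <= q ^+ (m - n) by apply: exprn_ge0.
  have bq : 0 <= B * q ^+ n by rewrite mulr_ge0 // exprn_ge0.
  have -> : 2 * B * q ^+ n = (B * q ^+ n) * 2 by ring.
  apply: ler_wpM2l => //; lra.
have lim : `|f x - S n| <= 2 * B * q ^+ n.
  have cn : `|S m - S n| @[m --> \oo] --> `|f x - S n|.
    apply: cvg_norm; apply: cvgB; [exact: cvx | exact: cvg_cst].
  apply: (cvgr_to_le cn).
  near=> m; apply: bnd; near: m; exact: nbhs_infty_ge.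
apply: (le_trans lim); rewrite /q expr_div_n.
by rewrite le_eqVlt; apply/orP; left; apply/eqP; ring.
Unshelve. all: end_near.
Qed.

Lemma min_in (R : realType) (a b x : R) : - Num.min a b < x -> - a < x /\ - b < x.
Proof.
rewrite ltrNl lt_min => /andP[h1 h2]; split; by rewrite ltrNl.
Qed.

Lemma min_pos (R : realType) (a b : R) : 0 < a -> 0 < b -> 0 < Num.min a b.
Proof. by move=> ha hb; rewrite lt_min ha hb. Qed.

Lemma jet_add (R : realType) (f g : R -> R) a b n :
  Jet f a n -> Jet g b n -> Jet (fun x => f x + g x) (fun i => a i + b i) n.
Proof.
move=> [K1 [d1 [d10 H1]]] [K2 [d2 [d20 H2]]].
exists (K1 + K2), (Num.min d1 d2); split; first exact: min_pos.
move=> x /andP[xl xr]; have [xl1 xl2] := min_in xl.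
have e1 := H1 x (introT andP (conj xl1 xr)).
have e2 := H2 x (introT andP (conj xl2 xr)).
have -> : \sum_(i < n) (a i + b i) * x ^+ i =
  \sum_(i < n) a i * x ^+ i + \sum_(i < n) b i * x ^+ i.
  by rewrite -big_split; apply: eq_bigr => i _; rewrite mulrDl.
have -> : f x + g x - (\sum_(i < n) a i * x ^+ i + \sum_(i < n) b i * x ^+ i)
  = (f x - \sum_(i < n) a i * x ^+ i) + (g x - \sum_(i < n) b i * x ^+ i) by ring.
rewrite (le_trans (ler_normD _ _)) // mulrDl lerD //.
Qed.

Lemma jet_sub (R : realType) (f g : R -> R) a b n :
  Jet f a n -> Jet g b n -> Jet (fun x => f x - g x) (fun i => a i - b i) n.
Proof.
move=> [K1 [d1 [d10 H1]]] [K2 [d2 [d20 H2]]].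
exists (K1 + K2), (Num.min d1 d2); split; first exact: min_pos.
move=> x /andP[xl xr]; have [xl1 xl2] := min_in xl.
have e1 := H1 x (introT andP (conj xl1 xr)).
have e2 := H2 x (introT andP (conj xl2 xr)).
have -> : \sum_(i < n) (a i - b i) * x ^+ i =
  \sum_(i < n) a i * x ^+ i - \sum_(i < n) b i * x ^+ i.
  by rewrite -sumrB; apply: eq_bigr => i _; rewrite mulrBl.
have -> : f x - g x - (\sum_(i < n) a i * x ^+ i - \sum_(i < n) b i * x ^+ i)
  = (f x - \sum_(i < n) a i * x ^+ i) - (g x - \sum_(i < n) b i * x ^+ i) by ring.
rewrite (le_trans (ler_normB _ _)) // mulrDl lerD //.
Qed.

Lemma jet_scale (R : realType) (f : R -> R) a n (s : R) :
  Jet f a n -> Jet (fun x => s * f x) (fun i => s * a i) n.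
Proof.
move=> [K1 [d1 [d10 H1]]].
exists (`|s| * K1), d1; split => // x hx.
have -> : \sum_(i < n) s * a i * x ^+ i = s * \sum_(i < n) a i * x ^+ i.
  by rewrite mulr_sumr; apply: eq_bigr => i _; rewrite mulrA.
by rewrite -mulrBr normrM -mulrA ler_wpM2l // H1.
Qed.

Lemma jet_zero (R : realType) n : Jet (fun _ : R => 0) (fun _ => 0) n.
Proof.
exists 0, 1; split => // x _.
by rewrite big1 ?subrr ?normr0 ?mul0r // => i _; rewrite mul0r.
Qed.

Lemma jet_sum (R : realType) (I : Type) (s : seq I) (P : pred I)
  (F : I -> R -> R) (A : I -> nat -> R) n :
  (forall j, P j -> Jet (F j) (A j) n) ->
  Jet (fun x => \sum_(j <- s | P j) F j x) (fun i => \sum_(j <- s | P j) A j i) n.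
Proof.
move=> H; elim: s => [|j s IH].
  have -> : (fun x => \sum_(j <- [::] | P j) F j x) = (fun _ => 0).
    by apply/funext => x; rewrite big_nil.
  have -> : (fun i => \sum_(j <- [::] | P j) A j i) = (fun _ => 0).
    by apply/funext => x; rewrite big_nil.
  exact: jet_zero.
case Pj: (P j).
  have -> : (fun x => \sum_(j0 <- j :: s | P j0) F j0 x) =
     (fun x => F j x + \sum_(j0 <- s | P j0) F j0 x).
    by apply/funext => x; rewrite big_cons Pj.
  have -> : (fun i => \sum_(j0 <- j :: s | P j0) A j0 i) =
     (fun i => A j i + \sum_(j0 <- s | P j0) A j0 i).
    by apply/funext => x; rewrite big_cons Pj.
  exact: (jet_add (H j Pj) IH).
have -> : (fun x => \sum_(j0 <- j :: s | P j0) F j0 x) =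
   (fun x => \sum_(j0 <- s | P j0) F j0 x).
  by apply/funext => x; rewrite big_cons Pj.
have -> : (fun i => \sum_(j0 <- j :: s | P j0) A j0 i) =
   (fun i => \sum_(j0 <- s | P j0) A j0 i).
  by apply/funext => x; rewrite big_cons Pj.
exact: IH.
Qed.

Lemma jet_extc (R : realType) (f : R -> R) a b n :
  (forall i, (i < n)%N -> a i = b i) -> Jet f a n -> Jet f b n.
Proof.
move=> E [K [d [d0 H]]]; exists K, d; split => // x hx.
have <- : \sum_(i < n) a i * x ^+ i = \sum_(i < n) b i * x ^+ i.
  by apply: eq_bigr => i _; rewrite E.
exact: H.
Qed.

Lemma jet_extf (R : realType) (f g : R -> R) a n :
  (exists d : R, 0 < d /\ forall x, - d < x < 0 -> f x = g x) -> Jet f a n -> Jet g a n.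
Proof.
move=> [e [e0 E]] [K [d [d0 H]]]; exists K, (Num.min d e); split.
  exact: min_pos.
move=> x /andP[xl xr]; have [xl1 xl2] := min_in xl.
rewrite -E; last by rewrite xl2 xr.
by apply: H; rewrite xl1 xr.
Qed.

Lemma jet_zero_coef (R : realType) (h : R -> R) (d : nat -> R) :
  (forall n, Jet h d n) ->
  (exists e : R, 0 < e /\ forall x : R, - e < x < 0 -> h x = 0) ->
  forall i, d i = 0.
Proof.
move=> J [e [e0 He]] i; elim/ltn_ind: i => i IH.
have [K [del [del0 H]]] := J i.+1.
case: (eqVneq (d i) 0) => // di0; exfalso.
set K' := `|K| + 1.
have K'0 : 0 < K' by rewrite /K'; have := normr_ge0 K; lra.
have dn : 0 < `|d i| by rewrite normr_gt0.
set t := Num.min (Num.min del e) (`|d i| / K').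
have t0 : 0 < t by rewrite /t !min_pos // divr_gt0.
set x := - (t / 2).
have xr : x < 0 by rewrite /x; lra.
have [xl1 xl2] : - del < x /\ - e < x.
  have tm : t <= Num.min del e by rewrite /t ge_min lexx.
  have [h1 h2] := min_in (x := x) (a := del) (b := e) ltac:(rewrite /x; lra).
  by split.
have tl : t <= `|d i| / K' by rewrite /t ge_min lexx orbT.
have hx0 : h x = 0 by apply: He; rewrite xl2 xr.
have E : h x - \sum_(i0 < i.+1) d i0 * x ^+ i0 = - (d i * x ^+ i).
  rewrite hx0 big_ord_recr /= big1; last by move=> j _; rewrite IH // mul0r.
  ring.
have := H x (introT andP (conj xl1 xr)).
rewrite E normrN normrM normrX exprS.
have nx : `|x| = t / 2 by rewrite ltr0_norm // /x opprK.
rewrite nx => hb.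
have p0 : 0 < (t / 2) ^+ i by apply: exprn_gt0; lra.
have hb2 : `|d i| <= K * (t / 2).
  have : `|d i| * (t / 2) ^+ i <= (K * (t / 2)) * (t / 2) ^+ i.
    by rewrite -mulrA.
  by rewrite ler_pM2r.
have : K * (t / 2) <= K' * (t / 2).
  rewrite ler_pM2r; last lra.
  rewrite /K'; have := ler_norm K; lra.
have : K' * (t / 2) <= `|d i| / 2.
  have := ler_pM2l K'0 ; move=> _.
  have : K' * t <= `|d i|.
    by rewrite -ler_pdivlMl // mulrC.
  lra.
lra.
Qed.

Definition conv (R : realType) (a b : nat -> R) (i : nat) : R :=
  \sum_(j < i.+1) a j * b (i - j)%N.

Lemma poly_bound (R : realType) (a : nat -> R) n (x : R) : `|x| <= 1 ->
  `|\sum_(i < n) a i * x ^+ i| <= \sum_(i < n) `|a i|.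
Proof.
move=> x1; apply: (le_trans (ler_norm_sum _ _ _)); apply: ler_sum => i _.
rewrite normrM normrX; rewrite -[X in _ <= X]mulr1; apply: ler_wpM2l => //.
by apply: exprn_ile1.
Qed.

Lemma poly4_bound (R : realType) (c0 c1 c2 c3 c4 x : R) : `|x| <= 1 ->
  `|c0 + c1 * x + c2 * x ^+ 2 + c3 * x ^+ 3 + c4 * x ^+ 4| <=
  `|c0| + `|c1| + `|c2| + `|c3| + `|c4|.
Proof.
move=> x1.
have h k (ck : R) : `|ck * x ^+ k| <= `|ck|.
  rewrite normrM normrX; rewrite -[X in _ <= X]mulr1; apply: ler_wpM2l => //.
  by apply: exprn_ile1.
have := h 1%N c1; have := h 2%N c2; have := h 3%N c3; have := h 4%N c4.
rewrite expr1.
set A := `|_ * x ^+ 4|; set B := `|_ * x ^+ 3|; set C := `|_ * x ^+ 2|; set D := `|c1 * x|.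
move=> hA hB hC hD.
do 4 (apply: (le_trans (ler_normD _ _)); apply: lerD => //).
Qed.

Lemma jet_mul6 (R : realType) (f g : R -> R) a b :
  Jet f a 6 -> Jet g b 6 -> Jet (fun x => f x * g x) (conv a b) 6.
Proof.
move=> [Kf [df [df0 Hf]]] [Kg [dg [dg0 Hg]]].
set Sa := \sum_(i < 6) `|a i|; set Sb := \sum_(i < 6) `|b i|.
set Q := `|a 1%N * b 5%N + a 2%N * b 4%N + a 3%N * b 3%N + a 4%N * b 2%N + a 5%N * b 1%N|
  + `|a 2%N * b 5%N + a 3%N * b 4%N + a 4%N * b 3%N + a 5%N * b 2%N|
  + `|a 3%N * b 5%N + a 4%N * b 4%N + a 5%N * b 3%N|
  + `|a 4%N * b 5%N + a 5%N * b 4%N| + `|a 5%N * b 5%N|.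
exists (Kf * (Sb + `|Kg|) + Sa * Kg + Q), (Num.min (Num.min df dg) 1); split.
  by rewrite !min_pos.
move=> x /andP[xl xr]; have [xl' xl1] := min_in xl; have [xl2 xl3] := min_in xl'.
have x1 : `|x| <= 1 by rewrite ltr0_norm //; lra.
have ef := Hf x (introT andP (conj xl2 xr)).
have eg := Hg x (introT andP (conj xl3 xr)).
set Pa := \sum_(i < 6) a i * x ^+ i in ef; set Pb := \sum_(i < 6) b i * x ^+ i in eg.
set X := `|x| ^+ 6.
have X0 : 0 <= X by apply: exprn_ge0.
have X1 : X <= 1 by apply: exprn_ile1.
have pa := poly_bound a 6 x1; have pb := poly_bound b 6 x1.
rewrite -/Pa -/Sa in pa; rewrite -/Pb -/Sb in pb.
set q := (a 1%N * b 5%N + a 2%N * b 4%N + a 3%N * b 3%N + a 4%N * b 2%N + a 5%N * b 1%N)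
  + (a 2%N * b 5%N + a 3%N * b 4%N + a 4%N * b 3%N + a 5%N * b 2%N) * x
  + (a 3%N * b 5%N + a 4%N * b 4%N + a 5%N * b 3%N) * x ^+ 2
  + (a 4%N * b 5%N + a 5%N * b 4%N) * x ^+ 3 + (a 5%N * b 5%N) * x ^+ 4.
have qb : `|q| <= Q by apply: poly4_bound.
have E : \sum_(i < 6) conv a b i * x ^+ i = Pa * Pb - x ^+ 6 * q.
  rewrite /Pa /Pb /q /conv !big_ord_recr !big_ord0 /=; ring.
rewrite E.
have -> : f x * g x - (Pa * Pb - x ^+ 6 * q) =
  (f x - Pa) * g x + Pa * (g x - Pb) + x ^+ 6 * q by ring.
have gb : `|g x| <= Sb + `|Kg|.
  have -> : g x = Pb + (g x - Pb) by ring.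
  apply: (le_trans (ler_normD _ _)); apply: lerD => //.
  apply: (le_trans eg); rewrite -/X.
  have := ler_norm Kg; have := normr_ge0 Kg; nra.
have n1 : `|(f x - Pa) * g x| <= Kf * X * (Sb + `|Kg|).
  rewrite normrM; apply: ler_pM => //.
have n2 : `|Pa * (g x - Pb)| <= Sa * (Kg * X).
  rewrite normrM; apply: ler_pM => //.
have n3 : `|x ^+ 6 * q| <= X * Q.
  rewrite normrM normrX; apply: ler_pM => //.
apply: (le_trans (ler_normD _ _)).
have : `|(f x - Pa) * g x + Pa * (g x - Pb)| <= Kf * X * (Sb + `|Kg|) + Sa * (Kg * X).
  by apply: (le_trans (ler_normD _ _)); apply: lerD.
move=> n12.
have -> : (Kf * (Sb + `|Kg|) + Sa * Kg + Q) * X =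
  Kf * X * (Sb + `|Kg|) + Sa * (Kg * X) + X * Q by ring.
by apply: lerD.
Qed.
Lemma cRD (R : realType) (x y : R) : cR (x + y) = cR x + cR y.
Proof. by apply/eqP; rewrite eq_complex /= addr0 !eqxx. Qed.
Lemma cRM (R : realType) (x y : R) : cR (x * y) = cR x * cR y.
Proof. by apply/eqP; rewrite eq_complex /= !mulr0 !mul0r subr0 addr0 !eqxx. Qed.
Lemma cRN (R : realType) (x : R) : cR (- x) = - cR x.
Proof. by apply/eqP; rewrite eq_complex /= oppr0 !eqxx. Qed.
Lemma ReD (R : realType) (x y : R[i]) : complex.Re (x + y) = complex.Re x + complex.Re y.
Proof. by case: x; case: y. Qed.
Lemma ImD (R : realType) (x y : R[i]) : complex.Im (x + y) = complex.Im x + complex.Im y.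
Proof. by case: x; case: y. Qed.
Lemma Re_cR (R : realType) (t : R) (y : R[i]) : complex.Re (cR t * y) = t * complex.Re y.
Proof. by case: y => a b /=; ring. Qed.
Lemma Im_cR (R : realType) (t : R) (y : R[i]) : complex.Im (cR t * y) = t * complex.Im y.
Proof. by case: y => a b /=; ring. Qed.

Lemma cten_lin (R : realType) (s : R) (T U : tensor4 R) u v w z :
  cten (fun a b c d => s * T a b c d + U a b c d) u v w z =
  cR s * cten T u v w z + cten U u v w z.
Proof.
rewrite /cten mulr_sumr -big_split; apply: eq_bigr => a _.
rewrite mulr_sumr -big_split; apply: eq_bigr => b _.
rewrite mulr_sumr -big_split; apply: eq_bigr => c _.
rewrite mulr_sumr -big_split; apply: eq_bigr => d _.
by rewrite /= cRD cRM; ring.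
Qed.

Lemma Re_cten (R : realType) (T : tensor4 R) u v w z :
  complex.Re (cten T u v w z) = \sum_(a < 4) \sum_(b < 4) \sum_(c < 4) \sum_(d < 4)
     complex.Re (u a * (v b * (w c * z d))) * T a b c d.
Proof.
have h := big_morph (@complex.Re R) (@ReD R) (erefl (complex.Re (0 : R[i]))).
rewrite /cten h; apply: eq_bigr => a _.
rewrite h; apply: eq_bigr => b _.
rewrite h; apply: eq_bigr => c _.
rewrite h; apply: eq_bigr => d _.
by rewrite -!mulrA Re_cR mulrC.
Qed.

Lemma Im_cten (R : realType) (T : tensor4 R) u v w z :
  complex.Im (cten T u v w z) = \sum_(a < 4) \sum_(b < 4) \sum_(c < 4) \sum_(d < 4)
     complex.Im (u a * (v b * (w c * z d))) * T a b c d.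
Proof.
have h := big_morph (@complex.Im R) (@ImD R) (erefl (complex.Im (0 : R[i]))).
rewrite /cten h; apply: eq_bigr => a _.
rewrite h; apply: eq_bigr => b _.
rewrite h; apply: eq_bigr => c _.
rewrite h; apply: eq_bigr => d _.
by rewrite -!mulrA Im_cR mulrC.
Qed.

Lemma cten_transfer (R : realType) (F : R -> tensor4 R) (C : nat -> tensor4 R) u v w z :
  (forall al be ga de n, Jet (fun x => F x al be ga de) (fun i => C i al be ga de) n) ->
  (forall x : R, - 1 < x < 0 -> cten (F x) u v w z = 0) ->
  forall i, cten (C i) u v w z = 0.
Proof.
move=> J H0 i.
have hr : complex.Re (cten (C i) u v w z) = 0.
  apply: (jet_zero_coef (h := fun x => complex.Re (cten (F x) u v w z))
    (d := fun j => complex.Re (cten (C j) u v w z))); last first.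
    by exists 1; split => // x hx; rewrite H0.
  move=> n; apply: (jet_extf (f := fun x =>  \sum_(a < 4) \sum_(b < 4) \sum_(c < 4) \sum_(d < 4)
     complex.Re (u a * (v b * (w c * z d))) * F x a b c d)).
    by exists 1; split => // x _; rewrite Re_cten.
  apply: (jet_extc (a := fun j => \sum_(a < 4) \sum_(b < 4) \sum_(c < 4) \sum_(d < 4)
     complex.Re (u a * (v b * (w c * z d))) * C j a b c d)).
    by move=> j _; rewrite Re_cten.
  apply: jet_sum => a _; apply: jet_sum => b _; apply: jet_sum => c _; apply: jet_sum => d _.
  exact: (jet_scale (complex.Re (u a * (v b * (w c * z d)))) (J a b c d n)).
have hi : complex.Im (cten (C i) u v w z) = 0.
  apply: (jet_zero_coef (h := fun x => complex.Im (cten (F x) u v w z))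
    (d := fun j => complex.Im (cten (C j) u v w z))); last first.
    by exists 1; split => // x hx; rewrite H0.
  move=> n; apply: (jet_extf (f := fun x =>  \sum_(a < 4) \sum_(b < 4) \sum_(c < 4) \sum_(d < 4)
     complex.Im (u a * (v b * (w c * z d))) * F x a b c d)).
    by exists 1; split => // x _; rewrite Im_cten.
  apply: (jet_extc (a := fun j => \sum_(a < 4) \sum_(b < 4) \sum_(c < 4) \sum_(d < 4)
     complex.Im (u a * (v b * (w c * z d))) * C j a b c d)).
    by move=> j _; rewrite Im_cten.
  apply: jet_sum => a _; apply: jet_sum => b _; apply: jet_sum => c _; apply: jet_sum => d _.
  exact: (jet_scale (complex.Im (u a * (v b * (w c * z d)))) (J a b c d n)).
move: hr hi; case: (cten (C i) u v w z) => /= p q -> -> //.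
Qed.

Definition linP (R : realType) (P : tensor4 R -> Prop) :=
  P (fun _ _ _ _ => 0) /\
  forall (s : R) T U, P T -> P U -> P (fun a b c d => s * T a b c d + U a b c d).

Lemma lp_add (R : realType) (P : tensor4 R -> Prop) T U : linP P -> P T -> P U ->
  P (fun a b c d => T a b c d + U a b c d).
Proof.
move=> [_ L] hT hU.
suff -> : (fun a b c d => T a b c d + U a b c d) = (fun a b c d => 1 * T a b c d + U a b c d).
  exact: L.
by do 4 (apply: funext => ?); rewrite mul1r.
Qed.

Lemma lp_scale (R : realType) (P : tensor4 R -> Prop) (s : R) T : linP P -> P T ->
  P (fun a b c d => s * T a b c d).
Proof.
move=> [Z L] hT.
suff -> : (fun a b c d => s * T a b c d) = (fun a b c d => s * T a b c d + (fun _ _ _ _ => 0) a b c d).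
  exact: L.
by do 4 (apply: funext => ?); rewrite addr0.
Qed.

Lemma lp_sub (R : realType) (P : tensor4 R -> Prop) T U : linP P -> P T -> P U ->
  P (fun a b c d => T a b c d - U a b c d).
Proof.
move=> [Z L] hT hU.
suff -> : (fun a b c d => T a b c d - U a b c d) = (fun a b c d => (-1) * U a b c d + T a b c d).
  exact: L.
by do 4 (apply: funext => ?); rewrite mulN1r addrC.
Qed.

Lemma lp_opp (R : realType) (P : tensor4 R -> Prop) T : linP P -> P T ->
  P (fun a b c d => - T a b c d).
Proof.
move=> [Z L] hT.
suff -> : (fun a b c d => - T a b c d) = (fun a b c d => (-1) * T a b c d + (fun _ _ _ _ => 0) a b c d).
  exact: L.
by do 4 (apply: funext => ?); rewrite addr0 mulN1r.
Qed.

Lemma linP_weyl (R : realType) (g : 'M[R]_4) : linP (weyl_candidate g).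
Proof.
split.
  split=> *; rewrite ?oppr0 ?addr0 //.
  by rewrite big1 // => a _; rewrite big1 // => c _; rewrite mulr0.
move=> s T U [t1 t2 t3 t4 t5] [u1 u2 u3 u4 u5]; split.
- by move=> a b c d; rewrite t1 u1; ring.
- by move=> a b c d; rewrite t2 u2; ring.
- by move=> a b c d; rewrite t3 u3.
- move=> a b c d.
  have := t4 a b c d; have := u4 a b c d.
  move=> h1 h2.
  have -> : s * T a b c d + U a b c d + (s * T a c d b + U a c d b) + (s * T a d b c + U a d b c)
    = s * (T a b c d + T a c d b + T a d b c) + (U a b c d + U a c d b + U a d b c) by ring.
  by rewrite h1 h2 mulr0 addr0.
- move=> b d.
  have -> : \sum_(a < 4) \sum_(c < 4) invmx g a c * (s * T a b c d + U a b c d) =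
    s * (\sum_(a < 4) \sum_(c < 4) invmx g a c * T a b c d) +
    \sum_(a < 4) \sum_(c < 4) invmx g a c * U a b c d.
    rewrite mulr_sumr -big_split; apply: eq_bigr => a _.
    rewrite mulr_sumr -big_split; apply: eq_bigr => c _ /=; ring.
  by rewrite t5 u5 mulr0 addr0.
Qed.

Lemma psi_lin (R : realType) (s : R) (T U : tensor4 R) l k m b :
  psi (fun a b c d => s * T a b c d + U a b c d) l k m b =
  cR s * psi T l k m b + psi U l k m b.
Proof. by case: b => [|[|[|[|b]]]]; rewrite /psi cten_lin. Qed.

Lemma cR0 (R : realType) : cR (0 : R) = 0.
Proof. by apply/eqP; rewrite eq_complex /= !eqxx. Qed.

Lemma cten0 (R : realType) u v w z : cten (fun _ _ _ _ => (0 : R)) u v w z = 0.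
Proof.
rewrite /cten big1 // => a _; rewrite big1 // => b _; rewrite big1 // => c _.
by rewrite big1 // => d _; rewrite cR0 !mul0r.
Qed.

Lemma linP_psi (R : realType) l k m b : linP (fun T : tensor4 R => psi T l k m b = 0).
Proof.
split; first by case: b => [|[|[|[|b]]]]; rewrite /psi cten0.
move=> s T U hT hU; by rewrite psi_lin hT hU mulr0 addr0.
Qed.

Lemma weyl_transfer (R : realType) (g : 'M[R]_4) (F : R -> tensor4 R) (C : nat -> tensor4 R) :
  (forall al be ga de n, Jet (fun x => F x al be ga de) (fun i => C i al be ga de) n) ->
  (forall x : R, - 1 < x < 0 -> weyl_candidate g (F x)) ->
  forall i, weyl_candidate g (C i).
Proof.
move=> J W i; split.
- move=> a b c d.
  have h : (fun j => C j b a c d + C j a b c d) i = 0.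
    apply: (jet_zero_coef (d := fun j => C j b a c d + C j a b c d) (h := fun x => F x b a c d + F x a b c d)) => [n|].
      exact: jet_add.
    exists 1; split => // x hx; have [h1 _ _ _ _] := W x hx; by rewrite h1 addNr.
  move: h => /= h; lra.
- move=> a b c d.
  have h : (fun j => C j a b d c + C j a b c d) i = 0.
    apply: (jet_zero_coef (d := fun j => C j a b d c + C j a b c d) (h := fun x => F x a b d c + F x a b c d)) => [n|].
      exact: jet_add.
    exists 1; split => // x hx; have [_ h1 _ _ _] := W x hx; by rewrite h1 addNr.
  move: h => /= h; lra.
- move=> a b c d.
  have h : (fun j => C j c d a b - C j a b c d) i = 0.
    apply: (jet_zero_coef (d := fun j => C j c d a b - C j a b c d) (h := fun x => F x c d a b - F x a b c d)) => [n|].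
      exact: jet_sub.
    exists 1; split => // x hx; have [_ _ h1 _ _] := W x hx; by rewrite h1 subrr.
  move: h => /= h; lra.
- move=> a b c d.
  have h : (fun j => C j a b c d + C j a c d b + C j a d b c) i = 0.
    apply: (jet_zero_coef (d := fun j => C j a b c d + C j a c d b + C j a d b c) (h := fun x => F x a b c d + F x a c d b + F x a d b c)) => [n|].
      apply: jet_add => //; exact: jet_add.
    exists 1; split => // x hx; have [_ _ _ h1 _] := W x hx; by rewrite h1.
  by move: h.
- move=> b d.
  have h : (fun j => \sum_(a < 4) \sum_(c < 4) invmx g a c * C j a b c d) i = 0.
    apply: (jet_zero_coef (d := fun j => \sum_(a < 4) \sum_(c < 4) invmx g a c * C j a b c d) (h := fun x => \sum_(a < 4) \sum_(c < 4) invmx g a c * F x a b c d)) => [n|].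
      apply: jet_sum => a _; apply: jet_sum => c _; exact: jet_scale.
    exists 1; split => // x hx; have [_ _ _ _ h1] := W x hx; by rewrite h1.
  by move: h.
Qed.

Lemma unif_seq (R : realType) (T : eqType) (s : seq T) (P : T -> R -> R -> Prop) :
  (forall t K K' d d', K <= K' -> 0 < d' -> d' <= d -> P t K d -> P t K' d') ->
  (forall t, t \in s -> exists K d, 0 < d /\ P t K d) ->
  exists K d, 0 < d /\ forall t, t \in s -> P t K d.
Proof.
move=> mono; elim: s => [|t s IH] H.
  by exists 0, 1; split.
have [K1 [d1 [d10 H1]]] := H t (mem_head _ _).
have [K2 [d2 [d20 H2]]] : exists K d, 0 < d /\ forall t, t \in s -> P t K d.
  by apply: IH => t' ht'; apply: H; rewrite in_cons ht' orbT.
exists (Num.max K1 K2), (Num.min d1 d2); split; first exact: min_pos.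
move=> t'; rewrite in_cons => /orP[/eqP ->|ht'].
  apply: (mono _ K1 _ d1) => //; [by rewrite le_max lexx | exact: min_pos | by rewrite ge_min lexx].
apply: (mono _ K2 _ d2); [by rewrite le_max lexx orbT | exact: min_pos | by rewrite ge_min lexx orbT | exact: H2].
Qed.

Lemma unif_fin (R : realType) (T : finType) (P : T -> R -> R -> Prop) :
  (forall t K K' d d', K <= K' -> 0 < d' -> d' <= d -> P t K d -> P t K' d') ->
  (forall t, exists K d, 0 < d /\ P t K d) ->
  exists K d, 0 < d /\ forall t, P t K d.
Proof.
move=> mono H.
have [K [d [d0 Hd]]] := unif_seq (s := enum T) mono (fun t _ => H t).
by exists K, d; split => // t; apply: Hd; rewrite mem_enum.
Qed.
Lemma conv0 (R : realType) (a b : nat -> R) : conv a b 0 = a 0%N * b 0%N.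
Proof. by rewrite /conv big_ord_recr big_ord0 /= add0r. Qed.
Lemma conv1 (R : realType) (a b : nat -> R) : conv a b 1 = a 0%N * b 1%N + a 1%N * b 0%N.
Proof. by rewrite /conv !big_ord_recr big_ord0 /= add0r. Qed.
Lemma conv2 (R : realType) (a b : nat -> R) :
  conv a b 2 = a 0%N * b 2%N + a 1%N * b 1%N + a 2%N * b 0%N.
Proof. by rewrite /conv !big_ord_recr big_ord0 /= add0r. Qed.
Lemma conv3 (R : realType) (a b : nat -> R) :
  conv a b 3 = a 0%N * b 3%N + a 1%N * b 2%N + a 2%N * b 1%N + a 3%N * b 0%N.
Proof. by rewrite /conv !big_ord_recr big_ord0 /= add0r. Qed.
Lemma conv4 (R : realType) (a b : nat -> R) :
  conv a b 4 = a 0%N * b 4%N + a 1%N * b 3%N + a 2%N * b 2%N + a 3%N * b 1%N + a 4%N * b 0%N.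
Proof. by rewrite /conv !big_ord_recr big_ord0 /= add0r. Qed.
Lemma conv5 (R : realType) (a b : nat -> R) :
  conv a b 5 = a 0%N * b 5%N + a 1%N * b 4%N + a 2%N * b 3%N + a 3%N * b 2%N
    + a 4%N * b 1%N + a 5%N * b 0%N.
Proof. by rewrite /conv !big_ord_recr big_ord0 /= add0r. Qed.

Unset Implicit Arguments.

Theorem mainTheorem3 (R : realType)
  (g : 'M[R]_4) (l k : vec R) (m : vec R[i])
  (Omega : R -> R) (c : nat -> R)
  (LC : R -> tensor4 R) (Cf : nat -> R -> tensor4 R) (Cc : nat -> nat -> tensor4 R) :
  (* metric at p0 and null tetrad (l, k, m, mbar) *)
  g^T = g -> g \in unitmx -> null_tetrad g l k m ->
  (* Omega(lambda) has a power series expansion near 0, Omega(0) = 0, Omega_1 = -1 *)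
  pseries_near Omega c -> c 0%N = 0 -> c 1%N = -1 ->
  (* expansions C^(a) = sum_i C^(a,i) lambda^i *)
  (forall a : nat, (a < 5)%N -> forall al be ga de : 'I_4,
     pseries_near (fun x => Cf a x al be ga de) (fun i => Cc a i al be ga de)) ->
  (* decomposition L^* hatC = sum_a Omega^(5-a) C^(a) along gamma *)
  (forall x : R, -1 <= x < 0 -> forall al be ga de : 'I_4,
     LC x al be ga de = \sum_(a < 5) Omega x ^+ (5 - a) * Cf a x al be ga de) ->
  (* each C^(a) is a Weyl-tensor candidate with only psi_a possibly non-zero *)
  (forall a : nat, (a < 5)%N -> forall x : R, -1 <= x < 0 ->
     weyl_candidate g (Cf a x) /\ only_psi a (Cf a x) l k m) ->
  let O := Om c in
  let dN : tensor4 R := fun al be ga de =>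
    let C a i := Cc a i al be ga de in
    - C 4%N 0%N in
  let eIII : tensor4 R := fun al be ga de =>
    let C a i := Cc a i al be ga de in
    C 3%N 0%N + O 2%N / 2 * C 4%N 0%N - C 4%N 1%N in
  let fIID : tensor4 R := fun al be ga de =>
    let C a i := Cc a i al be ga de in
    - C 2%N 0%N - O 2%N * C 3%N 0%N + O 3%N / 6 * C 4%N 0%N + C 3%N 1%N
    - C 4%N 2%N + O 2%N / 2 * C 4%N 1%N in
  let gI : tensor4 R := fun al be ga de =>
    let C a i := Cc a i al be ga de in
    C 1%N 0%N + 3 * O 2%N / 2 * C 2%N 0%N
    + (O 2%N ^+ 2 / 4 - O 3%N / 3) * C 3%N 0%N + O 4%N / 24 * C 4%N 0%N
    - C 2%N 1%N + C 3%N 2%N - C 4%N 3%N + O 2%N / 2 * C 4%N 2%N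
    - O 2%N * C 3%N 1%N + O 3%N / 6 * C 4%N 1%N in
  let hI : tensor4 R := fun al be ga de =>
    let C a i := Cc a i al be ga de in
    - C 0%N 0%N - 2 * O 2%N * C 1%N 0%N
    + (O 3%N / 2 - 3 / 4 * O 2%N ^+ 2) * C 2%N 0%N
    + (1 / 6 * O 2%N * O 3%N - O 4%N / 12) * C 3%N 0%N + O 5%N / 120 * C 4%N 0%N
    + C 1%N 1%N - C 2%N 2%N + C 3%N 3%N - C 4%N 4%N
    + 3 / 2 * O 2%N * C 2%N 1%N - O 2%N * C 3%N 2%N + O 2%N / 2 * C 4%N 3%N
    + O 2%N ^+ 2 / 4 * C 3%N 1%N - O 3%N / 3 * C 3%N 1%N
    + O 3%N / 6 * C 4%N 2%N + O 4%N / 24 * C 4%N 1%N in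
  (* the expansion, with an O(lambda^6) remainder as lambda -> 0^- *)
  (exists K del : R, 0 < del /\
     forall x : R, - del < x < 0 -> forall al be ga de : 'I_4,
       `| LC x al be ga de
          - (x * dN al be ga de + x ^+ 2 * eIII al be ga de
             + x ^+ 3 * fIID al be ga de + x ^+ 4 * gI al be ga de
             + x ^+ 5 * hI al be ga de) | <= K * `|x| ^+ 6)
  (* the five tensors are Weyl-tensor candidates *)
  /\ [/\ weyl_candidate g dN, weyl_candidate g eIII, weyl_candidate g fIID,
         weyl_candidate g gI & weyl_candidate g hI]
  (* d^(N): only psi_4 possibly non-zero (type N or zero, l fourfold PND) *)
  /\ only_psi 4 dN l k m
  (* e^(III): psi_0 = psi_1 = psi_2 = 0 (type III or more special) *)
  /\ (forall b : nat, (b <= 2)%N -> psi eIII l k m b = 0)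
  (* f^(II/D): psi_0 = psi_1 = 0 (l repeated PND: type II/D or more special) *)
  /\ (forall b : nat, (b <= 1)%N -> psi fIID l k m b = 0).
Proof.
move=> gT gU hT hO c0 c1 hCf hLC hW O dN eIII fIID gI hI.
have J : forall a, (a < 5)%N -> forall al be ga de n,
    Jet (fun x => Cf a x al be ga de) (fun i => Cc a i al be ga de) n.
  by move=> a ha al be ga de n; exact: (pseries_jet n (hCf a ha al be ga de)).
have JO : Jet Omega c 6 := pseries_jet 6 hO.
have O2 : O 2%N = 2 * c 2%N by rewrite /O /Om.
have O3 : O 3%N = 6 * c 3%N by rewrite /O /Om.
have O4 : O 4%N = 24 * c 4%N by rewrite /O /Om.
have O5 : O 5%N = 120 * c 5%N by rewrite /O /Om.
have key : forall al be ga de : 'I_4, exists K del : R, 0 < del /\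
     forall x : R, - del < x < 0 ->
       `| LC x al be ga de
          - (x * dN al be ga de + x ^+ 2 * eIII al be ga de
             + x ^+ 3 * fIID al be ga de + x ^+ 4 * gI al be ga de
             + x ^+ 5 * hI al be ga de) | <= K * `|x| ^+ 6.
  move=> al be ga de.
  pose t := fun i : nat => match i with
    | 1 => dN al be ga de | 2 => eIII al be ga de | 3 => fIID al be ga de
    | 4 => gI al be ga de | 5 => hI al be ga de | _ => 0 end.
  have Jt : Jet (fun x => LC x al be ga de) t 6.
    apply: (jet_extf (f := fun x => Omega x * (Cf 4%N x al be ga de + Omega x *
      (Cf 3%N x al be ga de + Omega x * (Cf 2%N x al be ga de + Omega x *
      (Cf 1%N x al be ga de + Omega x * Cf 0%N x al be ga de)))))).
      exists 1; split => // x /andP[x1 x2]; rewrite hLC; last by rewrite ltW.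
      rewrite !big_ord_recr big_ord0 /=; ring.
    have JJ := jet_mul6 JO (jet_add (J 4%N erefl al be ga de 6) (jet_mul6 JO
       (jet_add (J 3%N erefl al be ga de 6) (jet_mul6 JO
       (jet_add (J 2%N erefl al be ga de 6) (jet_mul6 JO
       (jet_add (J 1%N erefl al be ga de 6) (jet_mul6 JO (J 0%N erefl al be ga de 6))))))))).
    apply: (jet_extc _ JJ) => i hi.
    case: i hi => [|[|[|[|[|[|i]]]]]] // _; rewrite /t.
    all: do 5 (rewrite ?conv0 ?conv1 ?conv2 ?conv3 ?conv4 ?conv5 /=).
    all: rewrite ?c0 ?c1.
    - ring.
    - rewrite /dN /=; ring.
    - rewrite /eIII /= O2; by field.
    - rewrite /fIID /= O2 O3; by field.
    - rewrite /gI /= O2 O3 O4; by field.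
    - rewrite /hI /= O2 O3 O4 O5; by field.
  have [K [d [d0 H]]] := Jt; exists K, d; split => // x hx.
  have := H x hx.
  have -> : \sum_(i < 6) t i * x ^+ i = x * dN al be ga de + x ^+ 2 * eIII al be ga de
             + x ^+ 3 * fIID al be ga de + x ^+ 4 * gI al be ga de
             + x ^+ 5 * hI al be ga de.
    rewrite !big_ord_recr big_ord0 /= /t; ring.
  by [].
have WC : forall a i, (a < 5)%N -> weyl_candidate g (Cc a i).
  move=> a i ha; apply: (weyl_transfer (F := Cf a)); first exact: J.
  move=> x /andP[x1 x2].
  by have [] := hW a ha x (introT andP (conj (ltW x1) x2)).
have PC : forall a i b, (a < 5)%N -> (b < 5)%N -> b != a -> psi (Cc a i) l k m b = 0.
  move=> a i b ha hb hba.
  have H0 : forall x : R, - 1 < x < 0 -> psi (Cf a x) l k m b = 0.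
    move=> x /andP[x1 x2].
    by have [_ ] := hW a ha x (introT andP (conj (ltW x1) x2)); apply.
  move: H0; case: b hb hba => [|[|[|[|b]]]] _ _ H0; rewrite /psi;
    apply: (cten_transfer (F := Cf a)) => //; first [exact: J | by move=> x hx; have := H0 x hx].
split.
  have mono : forall (t : ('I_4 * 'I_4 * 'I_4 * 'I_4)%type) (K K' d d' : R),
    K <= K' -> 0 < d' -> d' <= d ->
    (let: (al, be, ga, de) := t in forall x : R, - d < x < 0 ->
       `| LC x al be ga de
          - (x * dN al be ga de + x ^+ 2 * eIII al be ga de
             + x ^+ 3 * fIID al be ga de + x ^+ 4 * gI al be ga de
             + x ^+ 5 * hI al be ga de) | <= K * `|x| ^+ 6) ->
    (let: (al, be, ga, de) := t in forall x : R, - d' < x < 0 ->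
       `| LC x al be ga de
          - (x * dN al be ga de + x ^+ 2 * eIII al be ga de
             + x ^+ 3 * fIID al be ga de + x ^+ 4 * gI al be ga de
             + x ^+ 5 * hI al be ga de) | <= K' * `|x| ^+ 6).
    move=> [[[al be] ga] de] K K' d d' hK hd' hd H x /andP[xl xr].
    apply: (le_trans (H x _)); first by rewrite xr andbT; lra.
    by apply: ler_wpM2r => //; exact: exprn_ge0.
  have [K [d [d0 HU]]] := unif_fin mono (fun t => match t with (al, be, ga, de) => key al be ga de end).
  exists K, d; split => // x hx al be ga de.
  exact: (HU (al, be, ga, de) x hx).
have LW := linP_weyl g.
split.
  rewrite /dN /eIII /fIID /gI /hI /=.
  split; repeat (first [apply: (lp_sub LW) | apply: (lp_add LW) | apply: (lp_opp LW)
     | apply: (lp_scale _ LW) | by apply: WC]).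
split.
  move=> b hb hb4; rewrite /dN /=.
  apply: (lp_opp (linP_psi l k m b)); exact: PC.
split.
  move=> b hb; have LP := linP_psi l k m b; rewrite /eIII /=.
  repeat (first [apply: (lp_sub LP) | apply: (lp_add LP) | apply: (lp_opp LP)
     | apply: (lp_scale _ LP) | apply: PC]).
  all: try (clear LP; by case: b hb => [|[|[|b]]]).
move=> b hb; have LP := linP_psi l k m b; rewrite /fIID /=.
repeat (first [apply: (lp_sub LP) | apply: (lp_add LP) | apply: (lp_opp LP)
   | apply: (lp_scale _ LP) | apply: PC]).
all: clear LP; by case: b hb => [|[|b]].
Qed.
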